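(* Consider an $N$-player game where player $i$ has a convex compact set $X_i\subseteq\mathbb{R}^{n_i}$ and a real-valued objective $f_i$ with $f_i(\cdot,x_{-i})$ $\rho_i$-weakly convex on $\mathbb{R}^{n_i}$ for every $x_{-i}$, and let $0<\eta<\min_i\rho_i^{-1}$. Suppose that for every $i$ and $x_{-i}$ the subdifferential map $\partial_{x_i}f_i(\cdot,x_{-i})$ is $L_i$-Lipschitz. Let $x^*\in X$ be a QNE of the Moreau-smoothed game, i.e. $\nabla_{x_i}f_i^\eta(x_i^*,x_{-i}^* )^\top(x_i-x_i^* )\ge0$ for all $x_i\in X_i$ and all $i$, and suppose $\|\nabla_{x_i}f_i^\eta(x_i^*,x_{-i}^* )\|\le M^*$ for all $i$. Then $x^*$ is an $\eta LDM^*$-QNE of the original game, where $L\triangleq\max_iL_i$ and $D\triangleq\max_i\operatorname{diam}(X_i)$.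
   Context: A function $g$ is $\rho$-weakly convex if $g+\frac\rho2\|\cdot\|^2$ is convex; its subdifferential is $\partial g(x)=\partial(g+\frac\rho2\|\cdot\|^2)(x)-\rho x$. $f_i^\eta(x_i,x_{-i})\triangleq\min_{y\in\mathbb{R}^{n_i}}\{f_i(y,x_{-i})+\frac1{2\eta}\|y-x_i\|^2\}$ is the Moreau envelope in $x_i$ (differentiable in $x_i$ for $\eta<\rho_i^{-1}$). A set-valued map $F$ is $L$-Lipschitz if $F(u)\subseteq F(v)+L\|u-v\|\mathbb{B}$ for all $u,v$, with $\mathbb{B}$ the closed unit ball. For $\epsilon\ge0$, $x^*\in X$ is an $\epsilon$-QNE of the original game if for every $i$, $f_i'(x_i^*,x_{-i}^*;x_i-x_i^* )\ge-\epsilon$ for all $x_i\in X_i$, where $f_i'(\cdot,x_{-i}^*;d)$ is the directional derivative of $f_i(\cdot,x^*_{-i})$. *)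

(* Defs.v *)
From HB Require Import structures.
From mathcomp Require Import all_boot all_order all_algebra.
From mathcomp Require Import all_classical all_reals all_analysis.
Set Implicit Arguments. Unset Strict Implicit. Unset Printing Implicit Defensive.
Import Order.TTheory GRing.Theory Num.Theory.
Import numFieldNormedType.Exports.
Local Open Scope classical_set_scope.
Local Open Scope ring_scope.

Section Defs.
Variable R : realType.

Definition dotv n (u v : 'rV[R]_n) : R := \sum_(j < n) u 0 j * v 0 j.
Definition enorm n (v : 'rV[R]_n) : R := Num.sqrt (dotv v v).

Definition convex_fun n (h : 'rV[R]_n -> R) : Prop :=
  forall (x y : 'rV[R]_n) (t : R), 0 <= t <= 1 ->
    h (t *: x + (1 - t) *: y) <= t * h x + (1 - t) * h y.

Definition weakly_convex n (rho : R) (g : 'rV[R]_n -> R) : Prop :=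
  convex_fun (fun y => g y + rho / 2 * (enorm y) ^+ 2).

Definition cvx_subdiff n (h : 'rV[R]_n -> R) (x : 'rV[R]_n) : set 'rV[R]_n :=
  [set v | forall y, h x + dotv v (y - x) <= h y].

Definition wsubdiff n (rho : R) (g : 'rV[R]_n -> R) (x : 'rV[R]_n) : set 'rV[R]_n :=
  [set w - rho *: x | w in cvx_subdiff (fun y => g y + rho / 2 * (enorm y) ^+ 2) x].

Definition setval_lipschitz n (F : 'rV[R]_n -> set 'rV[R]_n) (L : R) : Prop :=
  forall u v a, F u a -> exists2 b, F v b & enorm (a - b) <= L * enorm (u - v).

Definition moreau n (eta : R) (g : 'rV[R]_n -> R) (x : 'rV[R]_n) : R :=
  inf [set g y + (2 * eta)^-1 * (enorm (y - x)) ^+ 2 | y in [set: 'rV[R]_n]].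

Definition is_gradient n (g : 'rV[R]_n -> R) (x gr : 'rV[R]_n) : Prop :=
  forall e : R, 0 < e -> exists2 d : R, 0 < d & forall h : 'rV[R]_n,
    enorm h < d -> `|g (x + h) - g x - dotv gr h| <= e * enorm h.

Definition is_dir_deriv n (g : 'rV[R]_n -> R) (x d : 'rV[R]_n) (l : R) : Prop :=
  (fun t : R => (g (x + t *: d) - g x) / t) @ 0^'+ --> l.

Definition diam n (X : set 'rV[R]_n) : R :=
  sup [set enorm (u - v) | u in X & v in X].

End Defs.

(* Games: N players, player i has strategies in R^(n i); a joint profile is a
   dependent function; (y, x_{-i}) is  dfwith x y  (x with component i set to y). *)
Definition profile (R : realType) (N : nat) (n : 'I_N -> nat) :=
  forall i : 'I_N, 'rV[R]_(n i).

Definition partial_obj (R : realType) (N : nat) (n : 'I_N -> nat)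
  (f : 'I_N -> profile R n -> R) (i : 'I_N) (x : profile R n) : 'rV[R]_(n i) -> R :=
  fun y => f i (@dfwith _ (fun j => 'rV[R]_(n j)) x i y).
Arguments partial_obj {R N n} f i x _.

Definition eps_QNE (R : realType) (N : nat) (n : 'I_N -> nat)
  (X : forall i : 'I_N, set 'rV[R]_(n i)) (f : 'I_N -> profile R n -> R)
  (eps : R) (xs : profile R n) : Prop :=
  (forall i, X i (xs i)) /\
  forall i (xi : 'rV[R]_(n i)), X i xi ->
    exists l : R, is_dir_deriv (partial_obj f i xs) (xs i) (xi - xs i) l /\ - eps <= l.

(* Main.v *)
Require Import Defs.
From HB Require Import structures.
From mathcomp Require Import all_boot all_order all_algebra.
From mathcomp Require Import all_classical all_reals all_analysis.
From mathcomp Require Import ring lra.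
Import Order.TTheory GRing.Theory Num.Theory.
Import numFieldNormedType.Exports.
Local Open Scope classical_set_scope.
Local Open Scope ring_scope.
Set Implicit Arguments. Unset Strict Implicit. Unset Printing Implicit Defensive.
Section Basics.
Variable R : realType.
Implicit Types (a b t : R).

Lemma dotvC n (u v : 'rV[R]_n) : dotv u v = dotv v u.
Proof. by rewrite /dotv; apply: eq_bigr => j _; rewrite mulrC. Qed.
Lemma dotvDl n (u v w : 'rV[R]_n) : dotv (u + v) w = dotv u w + dotv v w.
Proof. by rewrite /dotv -big_split; apply: eq_bigr => j _; rewrite mxE mulrDl. Qed.
Lemma dotvZl n a (u v : 'rV[R]_n) : dotv (a *: u) v = a * dotv u v.
Proof. by rewrite /dotv mulr_sumr; apply: eq_bigr => j _; rewrite mxE mulrA. Qed.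
Lemma dotvNl n (u v : 'rV[R]_n) : dotv (- u) v = - dotv u v.
Proof. by rewrite -scaleN1r dotvZl mulN1r. Qed.
Lemma dotvBl n (u v w : 'rV[R]_n) : dotv (u - v) w = dotv u w - dotv v w.
Proof. by rewrite dotvDl dotvNl. Qed.
Lemma dotv0l n (v : 'rV[R]_n) : dotv 0 v = 0.
Proof. by rewrite /dotv big1 // => j _; rewrite mxE mul0r. Qed.
Lemma dotvDr n (u v w : 'rV[R]_n) : dotv w (u + v) = dotv w u + dotv w v.
Proof. by rewrite dotvC dotvDl !(dotvC w). Qed.
Lemma dotvZr n a (u v : 'rV[R]_n) : dotv v (a *: u) = a * dotv v u.
Proof. by rewrite dotvC dotvZl dotvC. Qed.
Lemma dotvNr n (u v : 'rV[R]_n) : dotv v (- u) = - dotv v u.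
Proof. by rewrite dotvC dotvNl dotvC. Qed.
Lemma dotvBr n (u v w : 'rV[R]_n) : dotv w (u - v) = dotv w u - dotv w v.
Proof. by rewrite dotvDr dotvNr. Qed.
Lemma dotv0r n (v : 'rV[R]_n) : dotv v 0 = 0.
Proof. by rewrite dotvC dotv0l. Qed.
Definition dotvE := (dotvDl, dotvDr, dotvZl, dotvZr, dotvNl, dotvNr, dotvBl, dotvBr, dotv0l, dotv0r).

Lemma dotvv_ge0 n (v : 'rV[R]_n) : 0 <= dotv v v.
Proof. by rewrite /dotv sumr_ge0 // => j _; rewrite -expr2 sqr_ge0. Qed.
Lemma enorm_ge0 n (v : 'rV[R]_n) : 0 <= enorm v.
Proof. exact: sqrtr_ge0. Qed.
Lemma enorm_sq n (v : 'rV[R]_n) : enorm v ^+ 2 = dotv v v.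
Proof. by rewrite /enorm sqr_sqrtr // dotvv_ge0. Qed.
Lemma enormZ n a (v : 'rV[R]_n) : enorm (a *: v) = `|a| * enorm v.
Proof.
by rewrite /enorm dotvZl dotvZr mulrA -expr2 sqrtrM ?sqr_ge0 // sqrtr_sqr.
Qed.
Lemma enormN n (v : 'rV[R]_n) : enorm (- v) = enorm v.
Proof. by rewrite -scaleN1r enormZ normrN normr1 mul1r. Qed.
Lemma enormB n (u v : 'rV[R]_n) : enorm (u - v) = enorm (v - u).
Proof. by rewrite -enormN opprB. Qed.
Lemma enorm0 n : enorm (0 : 'rV[R]_n) = 0.
Proof. by rewrite /enorm dotv0l sqrtr0. Qed.

Lemma CS_sq n (u v : 'rV[R]_n) : dotv u v ^+ 2 <= dotv u u * dotv v v.
Proof.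
set A := dotv u u; set B := dotv u v; set C := dotv v v.
have e t : dotv (u + t *: v) (u + t *: v) = A + 2 * t * B + t ^+ 2 * C.
  rewrite !dotvE /A /B /C (dotvC v u); ring.
have hC : 0 <= C by apply: dotvv_ge0.
have hA : 0 <= A by apply: dotvv_ge0.
have [C0|Cp] := eqVneq C 0.
  have [B0|Bn] := eqVneq B 0; first by rewrite B0 expr0n /= mulr_ge0.
  have := dotvv_ge0 (u + (- (A + 1) / (2 * B)) *: v).
  rewrite e C0 mulr0 addr0.
  have -> : 2 * (- (A + 1) / (2 * B)) * B = - (A + 1) by field; rewrite Bn.
  lra.
have Cpos : 0 < C by rewrite lt_neqAle eq_sym Cp hC.
have := dotvv_ge0 (u + (- B / C) *: v); rewrite e.
move=> h.
have : 0 <= (A + 2 * (- B / C) * B + (- B / C) ^+ 2 * C) * C by rewrite mulr_ge0 // ltW.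
have -> : (A + 2 * (- B / C) * B + (- B / C) ^+ 2 * C) * C = A * C - B ^+ 2.
  by field; rewrite (gt_eqF Cpos).
lra.
Qed.

Lemma CS n (u v : 'rV[R]_n) : dotv u v <= enorm u * enorm v.
Proof.
apply: (le_trans (ler_norm _)).
rewrite /enorm -sqrtrM ?dotvv_ge0 // -sqrtr_sqr.
by rewrite ler_sqrt ?mulr_ge0 ?dotvv_ge0 // CS_sq.
Qed.
Lemma CSabs n (u v : 'rV[R]_n) : `|dotv u v| <= enorm u * enorm v.
Proof.
rewrite ler_norml CS andbT; have := CS (- u) v; rewrite dotvNl enormN; lra.
Qed.
End Basics.
Section HB.
Variable R : realType.

Lemma dotv_delta n (w : 'rV[R]_n) (k : 'I_n) : dotv w (delta_mx 0 k) = w 0 k.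
Proof.
rewrite /dotv (bigD1 k) //= big1 ?addr0.
  by rewrite mxE !eqxx mulr1.
by move=> j /negPf jk; rewrite mxE jk andbF mulr0.
Qed.

Lemma subgrad_exists n (h : 'rV[R]_n -> R) : convex_fun h ->
  forall x, exists s, forall y, h x + dotv s (y - x) <= h y.
Proof.
move=> hc x.
pose q v := h (x + v) - h x.
have qc : forall a b (t : R), 0 <= t <= 1 ->
    q (t *: a + (1 - t) *: b) <= t * q a + (1 - t) * q b.
  move=> a b t t01; rewrite /q.
  have -> : x + (t *: a + (1 - t) *: b) = t *: (x + a) + (1 - t) *: (x + b).
    by apply/matrixP => i j; rewrite !mxE; ring.
  have := hc (x + a) (x + b) t t01; lra.
pose supp k (v : 'rV[R]_n) := forall j : 'I_n, (k <= j)%N -> v 0 j = 0.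
pose P k := exists c, supp k c /\ forall v, supp k v -> dotv c v <= q v.
have P0 : P 0%N.
  exists 0; split; first by move=> j _; rewrite mxE.
  move=> v sv; have -> : v = 0.
    by apply/matrixP => i j; rewrite ord1 sv // mxE.
  by rewrite dotv0l /q addr0 subrr.
have PS : forall k, (k < n)%N -> P k -> P k.+1.
  move=> k hk [c [sc hcv]].
  pose kk : 'I_n := Ordinal hk.
  pose e : 'rV[R]_n := delta_mx 0 kk.
  have ekk : e 0 kk = 1 by rewrite mxE !eqxx.
  have ej : forall j, j != kk -> e 0 j = 0.
    by move=> j /negPf jk; rewrite mxE jk andbF.
  have key : forall v a w b, supp k v -> supp k w -> 0 < a -> 0 < b ->
      (dotv c v - q (v - a *: e)) / a <= (q (w + b *: e) - dotv c w) / b.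
    move=> v a w b sv sw a0 b0.
    pose l := b / (a + b).
    have ab0 : a + b != 0 by rewrite gt_eqF // addr_gt0.
    have l01 : 0 <= l <= 1.
      apply/andP; split; first by rewrite /l divr_ge0 // ltW // addr_gt0.
      by rewrite /l ler_pdivrMr ?addr_gt0 // mul1r; lra.
    have sz : supp k (l *: v + (1 - l) *: w).
      by move=> j kj; rewrite !mxE sv // sw // !mulr0 addr0.
    have ez : l *: (v - a *: e) + (1 - l) *: (w + b *: e) = l *: v + (1 - l) *: w.
      apply/matrixP => i j; rewrite !mxE /l; field; exact: ab0.
    have := qc (v - a *: e) (w + b *: e) l l01; rewrite ez.
    have := hcv _ sz; rewrite !dotvE => H1 H2.
    set X := dotv c v - q (v - a *: e) in H1 H2 *.
    set Y := q (w + b *: e) - dotv c w in H1 H2 *.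
    have H : l * X + (1 - l) * - Y <= 0 by rewrite /X /Y; lra.
    have H3 : b * X - a * Y <= 0.
      have : (a + b) * (l * X + (1 - l) * - Y) <= 0.
        by rewrite mulr_ge0_le0 // ltW // addr_gt0.
      have -> : (a + b) * (l * X + (1 - l) * - Y) = b * X - a * Y.
        by rewrite /l; field.
      by [].
    rewrite -subr_le0.
    have -> : X / a - Y / b = (b * X - a * Y) / (a * b).
      by field; rewrite gt_eqF // gt_eqF.
    by rewrite mulr_le0_ge0 // invr_ge0 mulr_ge0 // ltW.
  pose A := [set r : R | exists v a, [/\ supp k v, 0 < a &
              r = (dotv c v - q (v - a *: e)) / a]].
  have An : A !=set0 by exists ((dotv c 0 - q (0 - 1 *: e)) / 1), 0, 1; split => //; move=> j _; rewrite mxE.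
  have Aub : forall w b, supp k w -> 0 < b -> ubound A ((q (w + b *: e) - dotv c w) / b).
    by move=> w b sw b0 r [v [a [sv a0 ->]]]; apply: key.
  have hA : has_ubound A.
    have s0 : supp k 0 by move=> j _; rewrite mxE.
    by eexists; exact: (Aub 0 1 s0 ltr01).
  pose al := sup A.
  exists (c + al *: e); split.
    move=> j kj; rewrite !mxE sc ?(ltnW kj) //.
    have jk : j != kk by apply/eqP => jE; move: kj; rewrite jE /= ltnn.
    by rewrite (negPf jk) andbF mulr0 addr0.
  move=> v' sv'.
  pose t := v' 0 kk.
  pose v := v' - t *: e.
  have sv : supp k v.
    move=> j kj; rewrite !mxE.
    have [jE|jk] := eqVneq j kk.
      by rewrite jE !eqxx /t mulr1 subrr.
    rewrite sv' ?(negPf jk) ?andbF ?mulr0 ?subr0 //.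
    by rewrite ltn_neqAle kj andbT eq_sym -(inj_eq val_inj) in jk *.
  have v'E : v' = v + t *: e by rewrite /v subrK.
  have dE : dotv (c + al *: e) v' = dotv c v + al * t.
    by rewrite dotvDl dotvZl (dotvC e) dotv_delta -/t /v dotvBr dotvZr dotv_delta sc // mulr0 subr0.
  rewrite dE.
  have [tp|tn|t0] := ltgtP t 0.
  -
    have : (dotv c v - q (v - (- t) *: e)) / (- t) <= al.
      apply: ub_le_sup => //; exists v, (- t); split => //; lra.
    have -> : v - (- t) *: e = v' by rewrite scaleNr opprK.
    rewrite ler_pdivrMr ?oppr_gt0 //; lra.
  - have : al <= (q (v + t *: e) - dotv c v) / t.
      apply: ge_sup => //; exact: Aub.
    rewrite -v'E ler_pdivlMr //; lra.
  - rewrite t0 mulr0 addr0.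
    have -> : v' = v by rewrite v'E t0 scale0r addr0.
    exact: hcv.
have Pall : forall k, (k <= n)%N -> P k.
  elim => [//|k IH hk]; apply: PS => //; apply: IH; exact: ltnW.
have [c [_ hcv]] := Pall n (leqnn n).
exists c => y.
have hs : supp n (y - x) by move=> j; rewrite leqNgt ltn_ord.
have := hcv _ hs.
by rewrite /q (addrC x) subrK; lra.
Qed.
End HB.
Section DirDer.
Variable R : realType.

Lemma dirder n (F : 'rV[R]_n -> R) rho (x w d : 'rV[R]_n) :
  convex_fun (fun y => F y + rho / 2 * enorm y ^+ 2) ->
  cvx_subdiff (fun y => F y + rho / 2 * enorm y ^+ 2) x w ->
  exists l, is_dir_deriv F x d l /\ dotv (w - rho *: x) d <= l.
Proof.
set h := (fun y => F y + rho / 2 * enorm y ^+ 2) => hc hw.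
pose qh t := (h (x + t *: d) - h x) / t.
have lb : forall t, 0 < t -> dotv w d <= qh t.
  move=> t t0; rewrite /qh ler_pdivlMr //.
  have := hw (x + t *: d); rewrite (addrC x) addrK dotvZr; lra.
have mono : {in Interval (BRight (0:R)) (BLeft 1) &, nondecreasing_fun qh}.
  move=> s t; rewrite !in_itv /= => /andP[s0 _] /andP[t0 _] st.
  pose l := s / t.
  have l01 : 0 <= l <= 1.
    by apply/andP; split; [rewrite divr_ge0 // ltW | rewrite ler_pdivrMr // mul1r].
  have := hc (x + t *: d) x l l01.
  have -> : l *: (x + t *: d) + (1 - l) *: x = x + s *: d.
    apply/matrixP => i j; rewrite !mxE /l; field; by rewrite gt_eqF.
  move=> H.
  have HH : h (x + s *: d) - h x <= s / t * (h (x + t *: d) - h x).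
    rewrite -/l; lra.
  rewrite /qh ler_pdivrMr // -subr_ge0.
  have -> : (h (x + t *: d) - h x) / t * s - (h (x + s *: d) - h x) =
    s / t * (h (x + t *: d) - h x) - (h (x + s *: d) - h x).
    by field; rewrite gt_eqF.
  by rewrite subr_ge0.
pose I := [set` Interval (BRight (0:R)) (BLeft 1)].
have hlb : has_lbound (qh @` I).
  exists (dotv w d) => r [t It <-]; move: It; rewrite /I /= in_itv /= => /andP[t0 _]; exact: lb.
have ab : (BRight (0:R) < BLeft (1:R))%O by rewrite bnd_simp.
have cv := nondecreasing_at_right_cvgr ab mono hlb.
set lh := inf _ in cv.
have lhge : dotv w d <= lh.
  apply: lb_le_inf.
    exists (qh (1/2)), (1/2) => //; rewrite /I /= in_itv /=; apply/andP; split; lra.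
  move=> r [t It <-]; move: It; rewrite /I /= in_itv /= => /andP[t0 _]; exact: lb.
exists (lh - rho * dotv x d); split; last first.
  by rewrite dotvBl dotvZl (dotvC x); lra.
have E : {near 0^'+, (fun t => qh t - (rho * dotv x d + rho / 2 * dotv d d * t)) =1
            (fun t => (F (x + t *: d) - F x) / t)}.
  near=> t.
  have t0 : 0 < t by near: t; exact: nbhs_right_gt.
  rewrite /qh /h !enorm_sq !dotvE (dotvC d x).
  by field; rewrite gt_eqF.
have Fap : Filter ((0:R)^'+) by exact: at_right_proper_filter.
have h0 : (fun t : R => t) @ 0^'+ --> (0:R).
  by apply: cvg_at_right_filter; exact: cvg_id.
have h1 := @cvgMl_tmp _ _ _ Fap _ (rho / 2 * dotv d d) _ h0.
rewrite mulr0 in h1.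
have h2 := @cvgD _ _ _ _ Fap _ _ _ _ (@cvg_cst _ (rho * dotv x d) _ _ Fap) h1.
rewrite addr0 in h2.
have L := @cvgB _ _ _ _ Fap _ _ _ _ cv h2.
exact: cvg_trans (near_eq_cvg E) L.
Unshelve. all: by end_near.
Qed.
End DirDer.
Section Prox.
Variables (R : realType) (n : nat) (F : 'rV[R]_n -> R) (rho eta : R).
Hypotheses (rho0 : 0 < rho) (eta0 : 0 < eta) (etarho : eta < rho^-1)
  (wc : weakly_convex rho F).
Let h := fun y => F y + rho / 2 * enorm y ^+ 2.
Let psi (c y : 'rV[R]_n) := F y + (2 * eta)^-1 * enorm (y - c) ^+ 2.

Lemma sqD (u v : 'rV[R]_n) : enorm (u + v) ^+ 2 = enorm u ^+ 2 + 2 * dotv u v + enorm v ^+ 2.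
Proof. by rewrite !enorm_sq !dotvE (dotvC v u); ring. Qed.
Lemma sqZ t (v : 'rV[R]_n) : enorm (t *: v) ^+ 2 = t ^+ 2 * enorm v ^+ 2.
Proof. by rewrite enormZ exprMn real_normK // num_real. Qed.

Let hc : convex_fun h := wc.

Lemma rhoeta : rho * eta < 1.
Proof. by move: etarho; rewrite -div1r ltr_pdivlMr // mulrC. Qed.

Lemma kap_gt0 : 0 < (2 * eta)^-1 - rho / 2.
Proof.
have -> : (2 * eta)^-1 - rho / 2 = (1 - rho * eta) / (2 * eta).
  by field; rewrite gt_eqF.
by rewrite divr_gt0 ?mulr_gt0 // subr_gt0 rhoeta.
Qed.

Lemma psi_lb c : exists M, forall y, M <= psi c y.
Proof.
have [s hs] := subgrad_exists hc c.
set kap := (2 * eta)^-1 - rho / 2.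
have k0 : 0 < kap := kap_gt0.
set a := s - rho *: c.
exists (F c - enorm a ^+ 2 / (4 * kap)) => y.
have := hs y; rewrite /h /psi.
have -> : y = (y - c) + c by rewrite subrK.
rewrite addrK.
set z := y - c.
rewrite sqD.
have cs : - (enorm a * enorm z) <= dotv a z.
  by have := CSabs a z; rewrite ler_norml => /andP[].
have e1 : dotv a z = dotv s z - rho * dotv c z by rewrite /a dotvBl dotvZl.
have sqpos : 0 <= (2 * kap * enorm z - enorm a) ^+ 2 / (4 * kap).
  by rewrite divr_ge0 ?sqr_ge0 // ltW // mulr_gt0.
have e2 : (2 * kap * enorm z - enorm a) ^+ 2 / (4 * kap) =
    kap * enorm z ^+ 2 - enorm a * enorm z + enorm a ^+ 2 / (4 * kap).
  by field; rewrite gt_eqF.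
rewrite /kap in e2 sqpos.
rewrite (dotvC z c) /kap => H; lra.
Qed.

Definition m c := moreau eta F c.

Lemma m_le c y : m c <= psi c y.
Proof.
have [M hM] := psi_lb c.
apply: ge_inf; first by exists M => r [y' _ <-]; exact: hM.
by exists y.
Qed.

Lemma m_adh c e : 0 < e -> exists y, psi c y < m c + e.
Proof.
move=> e0; have [M hM] := psi_lb c.
have hi : has_inf [set psi c y | y in [set: 'rV[R]_n]].
  split; first by exists (psi c 0), 0.
  by exists M => r [y' _ <-]; exact: hM.
have [r [y _ <-] hr] := inf_adherent e0 hi.
by exists y.
Qed.

Lemma psiW_gen (p x g sp z : 'rV[R]_n) : p - x = - (eta *: g) ->
  h p + dotv sp z <= h (z + p) ->
  psi x p + dotv (sp - rho *: p - g) z <= psi x (z + p).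
Proof.
move=> pxE; rewrite /h /psi.
have e3 : z + p - x = z + - (eta *: g) by rewrite -pxE addrA.
rewrite e3 pxE !sqD !dotvE (dotvC p z) (dotvC g z) enormN sqZ.
have kz : 0 <= ((2 * eta)^-1 - rho / 2) * enorm z ^+ 2.
  by rewrite mulr_ge0 ?sqr_ge0 // ltW // kap_gt0.
have e4 : (2 * eta)^-1 * (2 * - (eta * dotv z g)) = - dotv z g.
  by field; rewrite gt_eqF.
lra.
Qed.

Lemma prox_opt x g : is_gradient (moreau eta F) x g ->
  forall y, psi x (x - eta *: g) <= psi x y.
Proof.
move=> hg y0; apply: le_trans (m_le x y0).
set p := x - eta *: g.
have pxE : p - x = - (eta *: g) by rewrite /p addrAC subrr add0r.
have [sp hsp] := subgrad_exists hc p.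
set W := sp - rho *: p - g.
have kz : forall z : 'rV[R]_n, 0 <= ((2 * eta)^-1 - rho / 2) * enorm z ^+ 2.
  by move=> z; rewrite mulr_ge0 ?sqr_ge0 // ltW // kap_gt0.
have psiW : forall y, psi x p + dotv W (y - p) <= psi x y.
  move=> y; have := hsp y; rewrite -{2}(subrK p y) => H.
  by have := psiW_gen pxE H; rewrite subrK.
apply/ler_addgt0Pr => tau tau0.
set K := eta * enorm W + 1.
have K0 : 0 < K by rewrite /K ltr_pwDr // mulr_ge0 ?enorm_ge0 // ltW.
set c := tau / (4 * K).
have c0 : 0 < c by rewrite divr_gt0 // mulr_gt0.
have [d d0 Hd] := hg c c0.
set r := Num.min (Num.min (d / 2) (2 * eta * c)) 1.
have : r <= r by [].
rewrite {2}/r !le_min => /andP[/andP[r1 r2] r3].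
have r0 : 0 < r.
  have f1 : 0 < d / 2 by lra.
  have f2 : 0 < 2 * eta * c by rewrite mulr_gt0 // mulr_gt0.
  by rewrite /r !lt_min f1 f2 ltr01.
set eps := r * c.
have eps0 : 0 < eps by rewrite mulr_gt0.
have [y hy] := m_adh x eps0.
set u := g - eta^-1 *: (x - y).
have yp : y - p = eta *: u.
  by apply/matrixP => i j; rewrite /u /p !mxE; field; rewrite gt_eqF.
have Ub : enorm u <= 3 * c.
  have [u0|un0] := eqVneq (enorm u) 0.
    by rewrite u0 mulr_ge0 // ltW.
  have up : 0 < enorm u by rewrite lt_neqAle eq_sym un0 enorm_ge0.
  set w := (r / enorm u) *: u.
  have wn : enorm w = r.
    by rewrite /w enormZ ger0_norm ?divr_ge0 ?enorm_ge0 ?(ltW r0) //; field; rewrite gt_eqF.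
  have uw : dotv u w = r * enorm u.
    rewrite /w dotvZr -enorm_sq; field; by rewrite gt_eqF.
  have rd : r < d by lra.
  have := Hd w; rewrite wn => /(_ rd); rewrite ler_norml => /andP[Hl _].
  have Hm := m_le (x + w) y; rewrite /m in Hm hy; rewrite /psi in Hm hy.
  have eY : y - (x + w) = (y - x) + - w by rewrite opprD addrA.
  rewrite eY sqD enormN wn dotvNr in Hm.
  set A := dotv (y - x) w in Hm.
  have iu : dotv u w = dotv g w + eta^-1 * A.
    by rewrite /u dotvBl dotvZl -(opprB y x) dotvNl /A; ring.
  have e5 : (2 * eta)^-1 * (2 * - A) = - (eta^-1 * A) by field; rewrite gt_eqF.
  have e6 : (2 * eta)^-1 * r ^+ 2 <= r * c.
    have : r / (2 * eta) <= c by rewrite ler_pdivrMr ?mulr_gt0 // mulrC.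
    move=> H; have := ler_wpM2l (ltW r0) H.
    have -> : r * (r / (2 * eta)) = (2 * eta)^-1 * r ^+ 2 by field; rewrite gt_eqF.
    by [].
  have key : r * enorm u <= r * (3 * c).
    rewrite -uw iu /eps in hy *.
    have Hm' := Hm; rewrite mulrDr mulrDr e5 in Hm'.
    lra.
  by rewrite -(ler_pM2l r0).
have := psiW y; rewrite yp dotvZr => HW.
have cs : - (enorm W * enorm u) <= dotv W u.
  by have := CSabs W u; rewrite ler_norml => /andP[].
have hWu : eta * (enorm W * enorm u) <= eta * enorm W * (3 * c).
  rewrite -mulrA; apply: ler_wpM2l; first exact: ltW.
  by apply: ler_wpM2l => //; exact: enorm_ge0.
have e7 : 4 * K * c = tau by rewrite /c; field; rewrite gt_eqF.
have e8 : eps <= c by rewrite /eps -[X in _ <= X]mul1r; apply: ler_wpM2r => //; exact: ltW.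
rewrite /m in hy; rewrite /K in e7.
have hcs : eta * - (enorm W * enorm u) <= eta * dotv W u by apply: ler_wpM2l => //; exact: ltW.
rewrite /psi in HW hy *.
nra.
Qed.

Lemma sub_gen (p x g z : 'rV[R]_n) t : p - x = - (eta *: g) ->
  psi x p <= psi x (p + t *: z) ->
  h (p + t *: z) <= t * h (z + p) + (1 - t) * h p ->
  t * (h p + dotv (g + rho *: p) z - h (z + p)) <=
  t * (t * (((2 * eta)^-1 - rho / 2) * enorm z ^+ 2)).
Proof.
move=> pxE; rewrite /h /psi.
have e : p + t *: z - x = t *: z + - (eta *: g) by rewrite -pxE addrAC addrC.
rewrite e pxE !sqD !dotvE !sqZ enormN (dotvC z g).
have e4 : (2 * eta)^-1 * (2 * (t * - (eta * dotv g z))) = - (t * dotv g z).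
  by field; rewrite gt_eqF.
lra.
Qed.

Lemma prox_subgrad x g : is_gradient (moreau eta F) x g ->
  cvx_subdiff (fun y => F y + rho / 2 * enorm y ^+ 2) (x - eta *: g)
    (g + rho *: (x - eta *: g)).
Proof.
move=> hg y.
have opt := prox_opt hg.
move: opt; set p := x - eta *: g => opt.
have pxE : p - x = - (eta *: g) by rewrite /p addrAC subrr add0r.
suff S : forall z, h p + dotv (g + rho *: p) z <= h (z + p).
  by have := S (y - p); rewrite subrK.
move=> z.
rewrite leNgt; apply/negP => Hlt.
have D0 : 0 < h p + dotv (g + rho *: p) z - h (z + p) by rewrite subr_gt0.
move: D0 (sub_gen (z := z) (t := 0) pxE) => D0 _.
have C0 : 0 <= ((2 * eta)^-1 - rho / 2) * enorm z ^+ 2.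
  by rewrite mulr_ge0 ?sqr_ge0 // ltW // kap_gt0.
move: D0 C0.
move: (h p + dotv (g + rho *: p) z - h (z + p)) (sub_gen (p := p) (x := x) (g := g) (z := z)) => D.
move: (((2 * eta)^-1 - rho / 2) * enorm z ^+ 2) => C SG D0 C0.
pose t := D / (C + D).
have CD : 0 < C + D by lra.
have t0 : 0 < t by rewrite divr_gt0.
have t1 : t <= 1 by rewrite /t ler_pdivrMr // mul1r; lra.
have conv : h (t *: (z + p) + (1 - t) *: p) <= t * h (z + p) + (1 - t) * h p.
  by apply: hc; apply/andP; split; [exact: ltW | exact: t1].
have ve : t *: (z + p) + (1 - t) *: p = p + t *: z.
  by apply/matrixP => i j; rewrite !mxE; ring.
rewrite ve in conv.
have := SG t pxE (opt _) conv.
rewrite ler_pM2l // => H.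
have : D * (C + D) <= t * C * (C + D) by rewrite ler_wpM2r // ltW.
have -> : t * C * (C + D) = D * C by rewrite /t; field; rewrite gt_eqF.
nra.
Qed.

Lemma core (Lc : R) (x g d : 'rV[R]_n) :
  setval_lipschitz (wsubdiff rho F) Lc ->
  is_gradient (moreau eta F) x g ->
  exists l v, [/\ is_dir_deriv F x d l, dotv v d <= l & enorm (g - v) <= Lc * (eta * enorm g)].
Proof.
move=> Lip hg.
set p := x - eta *: g.
have hw : wsubdiff rho F p g.
  exists (g + rho *: p); first exact: prox_subgrad.
  by rewrite addrK.
have [b [w hw' <-] hb] := Lip p x g hw.
have [l [hl hle]] := dirder d hc hw'.
exists l, (w - rho *: x); split => //.
move: hb; have -> : p - x = - (eta *: g) by rewrite /p addrAC subrr add0r.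
by rewrite enormN enormZ ger0_norm // ltW.
Qed.

End Prox.
Section Final.
Variable R : realType.

Lemma enorm_le_mx n (v : 'rV[R]_n) B : `|v| <= B -> enorm v <= Num.sqrt (n%:R * B ^+ 2).
Proof.
move=> vB; rewrite /enorm ler_sqrt; last by rewrite mulr_ge0 // sqr_ge0.
have -> : n%:R * B ^+ 2 = \sum_(j < n) B ^+ 2 by rewrite sumr_const card_ord mulr_natl.
apply: ler_sum => j _.
have hj : `|v 0 j| <= B.
  apply: le_trans vB.
  rewrite [X in _ <= X]mx_normrE.
  exact: (le_bigmax 0 (fun ij : 'I_1 * 'I_n => `|v ij.1 ij.2|) (0, j)).
rewrite -expr2 -real_normK ?num_real //.
by rewrite ler_pXn2r ?nnegrE // (le_trans _ hj).
Qed.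

Lemma diam_ub n (X : set 'rV[R]_n) u v : compact X -> X u -> X v ->
  enorm (u - v) <= diam X.
Proof.
move=> cX Xu Xv.
have [M [Mr HM]] := compact_bounded cX.
have HM1 : forall z, X z -> `|z| <= M + 1.
  by move=> z Xz; apply: (HM (M + 1)); [lra|].
apply: ub_le_sup.
  exists (Num.sqrt (n%:R * (2 * (M + 1)) ^+ 2)) => r [a Xa [b Xb <-]].
  apply: enorm_le_mx; apply: le_trans (ler_normB _ _) _.
  have := HM1 a Xa; have := HM1 b Xb; lra.
by exists u => //; exists v.
Qed.

End Final.
Unset Implicit Arguments.
Theorem theorem4p2 (R : realType) (N : nat) (n : 'I_N -> nat)
  (X : forall i : 'I_N, set 'rV[R]_(n i)) (f : 'I_N -> profile R n -> R)
  (rho L : 'I_N -> R) (eta Mstar : R) (xs : profile R n) :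
  (forall i, convex_set (X i)) ->
  (forall i, compact (X i)) ->
  (forall i, 0 < rho i) ->
  (forall i (x : profile R n), weakly_convex (rho i) (partial_obj f i x)) ->
  0 < eta -> (forall i, eta < (rho i)^-1) ->
  (forall i (x : profile R n),
     setval_lipschitz (wsubdiff (rho i) (partial_obj f i x)) (L i)) ->
  (forall i, X i (xs i)) ->
  (* x* is a QNE of the Moreau-smoothed game, with gradients bounded by M* *)
  (forall i, exists2 g : 'rV[R]_(n i),
     is_gradient (moreau eta (partial_obj f i xs)) (xs i) g &
     (forall xi, X i xi -> 0 <= dotv g (xi - xs i)) /\ enorm g <= Mstar) ->
  eps_QNE X f (eta * (\big[Num.max/0]_(i < N) L i)
                   * (\big[Num.max/0]_(i < N) diam (X i)) * Mstar) xs.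
Proof.
move=> Xc Xk rho0 wc eta0 etarho Lip Xxs QNE.
split => // i xi Xxi.
have [g hg [hqne hM]] := QNE i.
have [l [v [hl hvl hgv]]] := core (rho0 i) eta0 (etarho i) (wc i xs) (xi - xs i) (Lip i xs) hg.
exists l; split => //.
set Lm := \big[Num.max/0]_(i < N) L i.
set Dm := \big[Num.max/0]_(i < N) diam (X i).
have hLi : L i <= Lm by exact: (le_bigmax 0 L i).
have hL0 : 0 <= Lm by exact: bigmax_ge_id.
have hDi : diam (X i) <= Dm by exact: (le_bigmax 0 (fun j => diam (X j)) i).
have hd : enorm (xi - xs i) <= diam (X i) by apply: diam_ub.
have hd0 := enorm_ge0 (xi - xs i).
have hg0 := enorm_ge0 g.
have hgv0 := enorm_ge0 (g - v).
have hE : enorm (g - v) <= Lm * (eta * Mstar).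
  apply: (le_trans hgv).
  have [Li0|Li0] := leP (L i) 0.
    apply: (@le_trans _ _ 0).
      by rewrite mulr_le0_ge0 // mulr_ge0 // ltW.
    by rewrite mulr_ge0 // mulr_ge0 ?(ltW eta0) // (le_trans hg0 hM).
  apply: ler_pM => //; first exact: ltW.
    by rewrite mulr_ge0 // ltW.
  by apply: ler_wpM2l => //; exact: ltW.
have hE2 : enorm (g - v) * enorm (xi - xs i) <= Lm * (eta * Mstar) * Dm.
  apply: ler_pM => //; exact: le_trans hd hDi.
have cs : - (enorm (v - g) * enorm (xi - xs i)) <= dotv (v - g) (xi - xs i).
  by have := CSabs (v - g) (xi - xs i); rewrite ler_norml => /andP[].
rewrite enormB in cs.
have hq := hqne xi Xxi.
have ev : dotv v (xi - xs i) = dotv g (xi - xs i) + dotv (v - g) (xi - xs i).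
  by rewrite dotvBl; ring.
have -> : eta * Lm * Dm * Mstar = Lm * (eta * Mstar) * Dm by ring.
lra.
Qed.
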